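(* Let $r\in(0,1)$, $b\in(-1,1)$, $\lambda(r)=\ln\frac{1+r}{1-r}$ and $a=\tan\frac{b\pi}{4}$. Let $\overline{S}_{\lambda(r)}(b)=\{z\in\mathbb{S}: d_{\mathbb{S}}(z,b)\leqslant\lambda(r)\}$. Then $$\{\operatorname{Re} z: z\in\overline{S}_{\lambda(r)}(b)\}=[m_b(r),M_b(r)],$$ where $m_b(r)=\frac{4}{\pi}\arctan\frac{a-r}{1-ar}$ and $M_b(r)=\frac{4}{\pi}\arctan\frac{a+r}{1+ar}$.
   Context: $\mathbb{S}=\{z\in\mathbb{C}:-1<\operatorname{Re} z<1\}$. The hyperbolic density of $\mathbb{S}$ is $\rho_{\mathbb{S}}(z)=\frac{\pi}{2}\big/\cos\left(\frac{\pi}{2}\operatorname{Re} z\right)$ and $d_{\mathbb{S}}(z_1,z_2)=\inf_\gamma\int_\gamma\rho_{\mathbb{S}}(z)|dz|$ over $C^1$ curves $\gamma$ in $\mathbb{S}$ joining $z_1$ to $z_2$. *)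

(* Defs.v *)
(* Points of C are represented as pairs (x,y) of reals, z = x + i y. *)
From Stdlib Require Import Reals.
From Coquelicot Require Import Coquelicot.
Open Scope R_scope.

Definition in_strip (x y : R) : Prop := -1 < x < 1.

Definition rho_S (x : R) : R := (PI / 2) / cos (PI / 2 * x).

Definition C1_on01 (g : R -> R) : Prop :=
  forall t, 0 <= t <= 1 -> ex_derive g t /\ continuous (Derive g) t.

Definition admissible (x1 y1 x2 y2 : R) (gx gy : R -> R) : Prop :=
  C1_on01 gx /\ C1_on01 gy /\
  (forall t, 0 <= t <= 1 -> in_strip (gx t) (gy t)) /\
  gx 0 = x1 /\ gy 0 = y1 /\ gx 1 = x2 /\ gy 1 = y2.

Definition hyp_length (gx gy : R -> R) : R :=
  RInt (fun t => rho_S (gx t) * sqrt (Derive gx t ^ 2 + Derive gy t ^ 2)) 0 1.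

Definition dS (x1 y1 x2 y2 : R) : Rbar :=
  Glb_Rbar (fun l => exists gx gy, admissible x1 y1 x2 y2 gx gy /\ l = hyp_length gx gy).

(* Main.v *)
Require Import Defs.
From Stdlib Require Import Reals Lra Psatz.
From Coquelicot Require Import Coquelicot.
Open Scope R_scope.

Definition F (x:R) := ln ((1 + sin (PI/2*x)) / cos (PI/2*x)).
Definition G (t:R) := ln ((1+t)/(1-t)).

Lemma cos_pos_strip x : -1 < x < 1 -> 0 < cos (PI/2*x).
Proof. intros H. pose proof PI_RGT_0. apply cos_gt_0; nra. Qed.

Lemma sin_gt_strip x : -1 < x < 1 -> 0 < 1 + sin (PI/2*x).
Proof. intros H. pose proof PI_RGT_0.
  assert (sin (-(PI/2)) < sin (PI/2*x)) by (apply sin_increasing_1; nra).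
  rewrite sin_neg, sin_PI2 in H1. lra. Qed.

Lemma F_derive x : -1 < x < 1 -> is_derive F x (rho_S x).
Proof. intros H. pose proof (cos_pos_strip x H). pose proof (sin_gt_strip x H).
  unfold F, rho_S. auto_derive.
  - repeat split; try lra. apply Rdiv_lt_0_compat; lra.
  - pose proof (sin2_cos2 (PI/2*x)). unfold Rsqr in H2. field_simplify; try lra.
    set (s := sin (PI/2*x)) in *. set (c := cos (PI/2*x)) in *.
    replace (PI * c ^ 2 + PI * s ^ 2 + PI * s) with (PI*(1+s))
      by (transitivity (PI*(s*s+c*c) + PI*s); [rewrite H2; ring| ring]).
    field. split; nra.
Qed.

Lemma tan_bound x : -1 < x < 1 -> -1 < tan (x*PI/4) < 1.
Proof. intros H. pose proof PI_RGT_0.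
  assert (tan (-(PI/4)) < tan (x*PI/4) < tan (PI/4)) by (split; apply tan_increasing; nra).
  rewrite tan_neg, tan_PI4 in H1. lra.
Qed.

Lemma F_G x : -1 < x < 1 -> F x = G (tan (x*PI/4)).
Proof. intros H. pose proof (tan_bound x H) as Ht.
  assert (Hc : 0 < cos (x*PI/4)) by (pose proof PI_RGT_0; apply cos_gt_0; nra).
  unfold F, G. replace (PI/2*x) with (2*(x*PI/4)) by field.
  rewrite sin_2a, cos_2a. unfold tan in *.
  pose proof (sin2_cos2 (x*PI/4)) as H2. unfold Rsqr in H2.
  set (s := sin (x*PI/4)) in *. set (c := cos (x*PI/4)) in *.
  assert (-c < s < c).
  { destruct Ht as [H3 H4]. split.
    - assert (-1 * c < s / c * c) by (apply Rmult_lt_compat_r; lra).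
      replace (s/c*c) with s in H0 by (field; lra). lra.
    - assert (s / c * c < 1 * c) by (apply Rmult_lt_compat_r; lra).
      replace (s/c*c) with s in H0 by (field; lra). lra. }
  f_equal.
  replace (1 + 2*s*c) with ((s+c)*(s+c)) by (rewrite <- H2; ring).
  field. repeat split; nra.
Qed.

Lemma G_incr t t' : -1 < t -> t < t' -> t' < 1 -> G t < G t'.
Proof. intros. unfold G. apply ln_increasing.
  - apply Rdiv_lt_0_compat; lra.
  - assert ((1+t')/(1-t') - (1+t)/(1-t) = 2*(t'-t)/((1-t)*(1-t'))) by (field; lra).
    assert (0 < 2*(t'-t)/((1-t)*(1-t'))) by (apply Rdiv_lt_0_compat; nra). lra.
Qed.

Lemma F_incr x y : -1 < x -> x < y -> y < 1 -> F x < F y.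
Proof. intros. rewrite !F_G by lra.
  pose proof (tan_bound x) as A; pose proof (tan_bound y) as B.
  pose proof PI_RGT_0.
  assert (tan (x*PI/4) < tan (y*PI/4)) by (apply tan_increasing; nra).
  apply G_incr; [apply A|  | apply B]; lra.
Qed.

Lemma F_le x y : -1 < x < 1 -> -1 < y < 1 -> F x <= F y -> x <= y.
Proof. intros. destruct (Rle_lt_dec x y); auto.
  pose proof (F_incr y x). lra. Qed.

Lemma div_bound n d : 0 < d -> -d < n < d -> -1 < n/d < 1.
Proof. intros. assert (n/d*d = n) by (field; lra). split; nra. Qed.

Lemma atan_val p : -1 < p < 1 -> -1 < 4/PI*atan p < 1 /\ tan (4/PI*atan p*PI/4) = p.
Proof. intros H. pose proof PI_RGT_0.
  assert (atan (Ropp 1) < atan p < atan 1) by (split; apply atan_increasing; lra).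
  rewrite atan_opp, atan_1 in H1.
  split.
  - replace (4/PI*atan p) with ((4*atan p)/PI) by (field; lra).
    apply div_bound; lra.
  - replace (4/PI*atan p*PI/4) with (atan p) by (field; lra). apply tan_atan.
Qed.

Lemma G_minus a r : -1 < a < 1 -> 0 < r < 1 ->
  -1 < (a-r)/(1-a*r) < 1 /\ G ((a-r)/(1-a*r)) = G a - G r.
Proof. intros. assert (0 < 1 - a*r) by nra. split.
  - apply div_bound; nra.
  - unfold G. assert (E : (1 + (a - r) / (1 - a * r)) / (1 - (a - r) / (1 - a * r))
      = ((1+a)/(1-a) * / ((1+r)/(1-r)))) by (field; repeat split; nra).
    rewrite E. assert (0 < (1+a)/(1-a)) by (apply Rdiv_lt_0_compat; lra).
    assert (0 < (1+r)/(1-r)) by (apply Rdiv_lt_0_compat; lra).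
    rewrite ln_mult, ln_Rinv; try ring; auto. apply Rinv_0_lt_compat; auto.
Qed.

Lemma G_plus a r : -1 < a < 1 -> 0 < r < 1 ->
  -1 < (a+r)/(1+a*r) < 1 /\ G ((a+r)/(1+a*r)) = G a + G r.
Proof. intros. assert (0 < 1 + a*r) by nra. split.
  - apply div_bound; nra.
  - unfold G. assert (E : (1 + (a + r) / (1 + a * r)) / (1 - (a + r) / (1 + a * r))
      = ((1+a)/(1-a) * ((1+r)/(1-r)))) by (field; repeat split; nra).
    rewrite E. assert (0 < (1+a)/(1-a)) by (apply Rdiv_lt_0_compat; lra).
    assert (0 < (1+r)/(1-r)) by (apply Rdiv_lt_0_compat; lra).
    rewrite ln_mult; auto.
Qed.

Lemma rho_pos x : -1 < x < 1 -> 0 < rho_S x.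
Proof. intros. unfold rho_S. pose proof PI_RGT_0. pose proof (cos_pos_strip x H).
  apply Rdiv_lt_0_compat; lra. Qed.

Lemma rho_cont x : -1 < x < 1 -> continuous rho_S x.
Proof. intros. apply (ex_derive_continuous (V:=R_NormedModule) rho_S). pose proof (cos_pos_strip x H).
  unfold rho_S. auto_derive. lra. Qed.

Lemma rho_comp_cont gx t : ex_derive gx t -> -1 < gx t < 1 ->
  continuous (fun t => rho_S (gx t)) t.
Proof. intros. apply (continuous_comp gx rho_S). apply ex_derive_continuous; auto.
  apply rho_cont; auto. Qed.

Lemma FTC gx : C1_on01 gx -> (forall t, 0 <= t <= 1 -> -1 < gx t < 1) ->
  is_RInt (fun t => rho_S (gx t) * Derive gx t) 0 1 (F (gx 1) - F (gx 0)).
Proof. intros HC Hs.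
  assert (H := is_RInt_derive (fun t => F (gx t)) (fun t => rho_S (gx t) * Derive gx t) 0 1).
  rewrite Rmin_left, Rmax_right in H by lra.
  apply H.
  - intros t Ht. destruct (HC t Ht) as [He _].
    replace (rho_S (gx t) * Derive gx t) with (scal (Derive gx t) (rho_S (gx t)))
      by (unfold scal; simpl; unfold mult; simpl; ring).
    apply (is_derive_comp F gx). apply F_derive; auto. apply Derive_correct; auto.
  - intros t Ht. destruct (HC t Ht) as [He Hc].
    apply (continuous_mult (fun t => rho_S (gx t)) (Derive gx)); auto.
    apply rho_comp_cont; auto.
Qed.

Lemma length_lb x1 y1 x2 y2 gx gy : admissible x1 y1 x2 y2 gx gy ->
  Rabs (F x2 - F x1) <= hyp_length gx gy.
Proof. intros [Hx [Hy [Hs [H0 [_ [H1 _]]]]]].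
  assert (Hs' : forall t, 0 <= t <= 1 -> -1 < gx t < 1) by (intros; apply Hs; auto).
  pose proof (FTC gx Hx Hs') as HI. rewrite H0, H1 in HI.
  assert (Hh : ex_RInt (fun t => rho_S (gx t) * sqrt (Derive gx t ^ 2 + Derive gy t ^ 2)) 0 1).
  { apply (ex_RInt_continuous (V:=R_CompleteNormedModule)). rewrite Rmin_left, Rmax_right by lra. intros t Ht.
    destruct (Hx t Ht) as [Hxe Hxc]. destruct (Hy t Ht) as [Hye Hyc].
    apply (continuous_mult (fun t => rho_S (gx t)) (fun t => sqrt (Derive gx t ^ 2 + Derive gy t ^ 2))).
    - apply rho_comp_cont; auto.
    - apply continuous_sqrt_comp. apply (continuous_plus (fun t => Derive gx t ^ 2) (fun t => Derive gy t ^ 2)).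
      + apply (continuous_comp (Derive gx) (fun x => x ^ 2)); auto.
        apply (ex_derive_continuous (V:=R_NormedModule) (fun x => x ^ 2)); auto_derive; auto.
      + apply (continuous_comp (Derive gy) (fun x => x ^ 2)); auto.
        apply (ex_derive_continuous (V:=R_NormedModule) (fun x => x ^ 2)); auto_derive; auto. }
  assert (Hpt : forall t, 0 < t < 1 ->
     Rabs (rho_S (gx t) * Derive gx t) <= rho_S (gx t) * sqrt (Derive gx t ^ 2 + Derive gy t ^ 2)).
  { intros t Ht. assert (Hr := rho_pos (gx t) (Hs' t ltac:(lra))).
    rewrite Rabs_mult, (Rabs_right (rho_S _)) by lra.
    apply Rmult_le_compat_l; [lra|].
    rewrite <- sqrt_Rsqr_abs. apply sqrt_le_1_alt. unfold Rsqr. nra. }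
  unfold hyp_length. apply Rabs_le. split.
  - assert (HI' : is_RInt (fun y => opp (rho_S (gx y) * Derive gx y)) 0 1 (opp (F x2 - F x1)))
      by exact (is_RInt_opp _ _ _ _ HI).
    assert (RInt (fun y => opp (rho_S (gx y) * Derive gx y)) 0 1 <=
            RInt (fun t => rho_S (gx t) * sqrt (Derive gx t ^ 2 + Derive gy t ^ 2)) 0 1).
    { apply RInt_le; auto. lra. eexists; eauto.
      intros t Ht. specialize (Hpt t Ht). unfold opp; simpl.
      pose proof (Rle_abs (- (rho_S (gx t) * Derive gx t))) as Q. rewrite Rabs_Ropp in Q. simpl in Hpt. lra. }
    rewrite (is_RInt_unique _ _ _ _ HI') in H. change (opp (F x2 - F x1)) with (-(F x2 - F x1)) in H. lra.
  - assert (RInt (fun y => (rho_S (gx y) * Derive gx y)) 0 1 <=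
            RInt (fun t => rho_S (gx t) * sqrt (Derive gx t ^ 2 + Derive gy t ^ 2)) 0 1).
    { apply RInt_le; auto. lra. eexists; eauto.
      intros t Ht. specialize (Hpt t Ht).
      pose proof (Rle_abs (rho_S (gx t) * Derive gx t)). lra. }
    rewrite (is_RInt_unique _ _ _ _ HI) in H. lra.
Qed.

Lemma dS_lb x1 y1 x2 y2 : Rbar_le (Finite (Rabs (F x2 - F x1))) (dS x1 y1 x2 y2).
Proof. unfold dS. destruct (Glb_Rbar_correct
  (fun l => exists gx gy, admissible x1 y1 x2 y2 gx gy /\ l = hyp_length gx gy)) as [_ H].
  apply H. intros l [gx [gy [Ha ->]]]. simpl. eapply length_lb; eauto.
Qed.

Lemma dS_seg u b : -1 < u < 1 -> -1 < b < 1 -> Rbar_le (dS u 0 b 0) (Finite (Rabs (F b - F u))).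
Proof. intros Hu Hb. unfold dS.
  set (gx := fun t => u + t*(b-u)). set (gy := fun _ : R => 0).
  assert (Dx : forall t, Derive gx t = b - u).
  { intros. apply is_derive_unique. unfold gx. auto_derive; auto. ring. }
  assert (Dy : forall t, Derive gy t = 0).
  { intros. unfold gy. apply Derive_const. }
  assert (Hs : forall t, 0 <= t <= 1 -> -1 < gx t < 1).
  { intros t Ht. unfold gx.
    assert (0 <= (1-t)*(u+1)) by nra. assert (0 <= t*(b+1)) by nra.
    assert (0 <= (1-t)*(1-u)) by nra. assert (0 <= t*(1-b)) by nra.
    destruct (Rle_dec t (1/2)); split; nra. }
  assert (HC : C1_on01 gx).
  { intros t Ht. split. unfold gx; auto_derive; auto.
    apply (continuous_ext (fun _ => b - u)). intros; rewrite Dx; auto. apply continuous_const. }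
  assert (Ha : admissible u 0 b 0 gx gy).
  { split; [exact HC|]. split.
    { intros t Ht. split. unfold gy; auto_derive; auto.
      apply (continuous_ext (fun _ => 0)). intros; rewrite Dy; auto. apply continuous_const. }
    split. { intros t Ht. apply Hs; auto. }
    unfold gx, gy. repeat split; ring. }
  destruct (Glb_Rbar_correct
  (fun l => exists gx gy, admissible u 0 b 0 gx gy /\ l = hyp_length gx gy)) as [H _].
  eapply Rbar_le_trans. apply H. exists gx, gy. split; [exact Ha | reflexivity].
  simpl. pose proof (FTC gx HC Hs) as HI.
  replace (gx 1) with b in HI by (unfold gx; ring).
  replace (gx 0) with u in HI by (unfold gx; ring).
  assert (Hex : ex_RInt (fun t => rho_S (gx t) * Derive gx t) 0 1) by (eexists; eauto).
  unfold hyp_length.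
  destruct (Rle_dec 0 (b - u)) as [Hp|Hn].
  - rewrite (RInt_ext _ (fun t => rho_S (gx t) * Derive gx t)).
    + rewrite (is_RInt_unique _ _ _ _ HI). apply Rle_abs.
    + intros t _. rewrite Dx, Dy.
      replace ((b - u) ^ 2 + 0 ^ 2) with (Rsqr (b-u)) by (unfold Rsqr; ring).
      rewrite sqrt_Rsqr_abs, Rabs_right by lra. reflexivity.
  - assert (HI' : is_RInt (fun y => opp (rho_S (gx y) * Derive gx y)) 0 1 (opp (F b - F u)))
      by exact (is_RInt_opp _ _ _ _ HI).
    rewrite (RInt_ext _ (fun y => opp (rho_S (gx y) * Derive gx y))).
    + rewrite (is_RInt_unique _ _ _ _ HI').
      change (opp (F b - F u)) with (-(F b - F u)).
      pose proof (Rle_abs (- (F b - F u))) as Q. rewrite Rabs_Ropp in Q. lra.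
    + intros t _. rewrite Dx, Dy.
      replace ((b - u) ^ 2 + 0 ^ 2) with (Rsqr (b-u)) by (unfold Rsqr; ring).
      rewrite sqrt_Rsqr_abs, Rabs_left by lra. unfold opp; simpl. ring.
Qed.

Theorem lemma3 (r b : R) (hr : 0 < r < 1) (hb : -1 < b < 1) :
  let lam := ln ((1 + r) / (1 - r)) in
  let a := tan (b * PI / 4) in
  forall u : R,
    (exists x y : R, in_strip x y /\ Rbar_le (dS x y b 0) (Finite lam) /\ u = x)
    <-> (4 / PI * atan ((a - r) / (1 - a * r)) <= u
         /\ u <= 4 / PI * atan ((a + r) / (1 + a * r))).
Proof.
  intros lam a u.
  assert (Ha : -1 < a < 1) by (apply tan_bound; auto).
  destruct (G_minus a r Ha hr) as [Hp Gp].
  destruct (G_plus a r Ha hr) as [Hq Gq].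
  destruct (atan_val _ Hp) as [Hm Tm].
  destruct (atan_val _ Hq) as [HM TM].
  set (m := 4 / PI * atan ((a - r) / (1 - a * r))) in *.
  set (M := 4 / PI * atan ((a + r) / (1 + a * r))) in *.
  assert (Fm : F m = F b - lam) by (rewrite !F_G, Tm, Gp by auto; reflexivity).
  assert (FM : F M = F b + lam) by (rewrite !F_G, TM, Gq by auto; reflexivity).
  split.
  - intros [x [y [Hs [Hd ->]]]].
    pose proof (Rbar_le_trans _ _ _ (dS_lb x y b 0) Hd) as H. simpl in H.
    unfold in_strip in Hs.
    apply Rabs_le_between in H.
    split; apply F_le; auto; lra.
  - intros [H1 H2]. exists u, 0. assert (Hu : -1 < u < 1) by lra.
    split; [exact Hu|]. split; [|reflexivity].
    eapply Rbar_le_trans. apply dS_seg; auto. simpl.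
    assert (F m <= F u).
    { destruct (Rle_lt_or_eq_dec _ _ H1) as [Hl|He]; [left; apply F_incr; lra| rewrite He; lra]. }
    assert (F u <= F M).
    { destruct (Rle_lt_or_eq_dec _ _ H2) as [Hl|He]; [left; apply F_incr; lra| rewrite He; lra]. }
    apply Rabs_le. lra.
Qed.
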